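(* Let $(t_k)_{k\in\mathbb{N}}$ be a strictly increasing sequence with $t_1=\pi/4$ and $t_k\to\pi/2$. In $\mathbb{R}^3$ let $C_1=\mathrm{co}\{(-2,2,1),(-2,2,-1)\}$, $C_2=\mathrm{co}\{(2,2,1),(2,2,-1)\}$ and $C_3=\overline{\mathrm{co}}\{p_k: k\in\mathbb{N}\}$ with $p_k=(\cos t_k,\sin t_k,(-1)^k)$. Let $C_1'=\{a\}$ with $a=(-2,2)$, $C_2'=\{b\}$ with $b=(2,2)$, and $C_3'=\overline{\mathrm{co}}\{v_k:k\in\mathbb{N}\}$ with $v_k=(\cos t_k,\sin t_k)$ be their projections onto the $xy$-plane, and for $u=(x,y,z)$ write $u'=(x,y)$. Fix $\varepsilon\in(0,1]$. Then a triple $(u_1,u_2,u_3)$ is an $\varepsilon$-cycle for $C_1,C_2,C_3$ with support $(w_1,w_2,w_3)$ if and only if: (i) the six points $u_1,u_2,u_3,w_1,w_2,w_3$ lie in a common plane orthogonal to the $z$-axis, and (ii) $(u_1',u_2',u_3')$ is an $\varepsilon$-cycle for $C_1',C_2',C_3'$ with support $(w_1',w_2',w_3')$.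
   Context: For a nonempty closed convex set $C$ in a Euclidean space, $\Pi_C(u)$ denotes the Euclidean projection of $u$ onto $C$. For three nonempty closed convex sets $D_1,D_2,D_3$ (in $\mathbb{R}^3$ or $\mathbb{R}^2$) and $\varepsilon\in(0,1]$, an $\varepsilon$-cycle is a triple $(u_1,u_2,u_3)$ with $u_1=u_3+\varepsilon(\Pi_{D_1}(u_3)-u_3)$, $u_2=u_1+\varepsilon(\Pi_{D_2}(u_1)-u_1)$, $u_3=u_2+\varepsilon(\Pi_{D_3}(u_2)-u_2)$. Its support is the triple $(w_1,w_2,w_3)=(\Pi_{D_1}(u_3),\Pi_{D_2}(u_1),\Pi_{D_3}(u_2))$. $\mathrm{co}$ denotes convex hull and $\overline{\mathrm{co}}$ closed convex hull. *)

(* Defs.v *)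
From HB Require Import structures.
From mathcomp Require Import all_boot all_order all_algebra.
From mathcomp Require Import all_classical all_reals all_analysis.
Set Implicit Arguments. Unset Strict Implicit. Unset Printing Implicit Defensive.
Import Order.TTheory GRing.Theory Num.Theory.
Import numFieldTopology.Exports numFieldNormedType.Exports.
Local Open Scope classical_set_scope.
Local Open Scope ring_scope.

Section Defs.
Variable R : realType.

Definition is_convex (n : nat) (C : set 'rV[R]_n) :=
  forall x y (l : R), C x -> C y -> 0 <= l <= 1 -> C (l *: x + (1 - l) *: y).

Definition co (n : nat) (S : set 'rV[R]_n) : set 'rV[R]_n :=
  [set x | forall C : set 'rV[R]_n, is_convex C -> S `<=` C -> C x].

Definition cco (n : nat) (S : set 'rV[R]_n) : set 'rV[R]_n :=
  [set x | forall C : set 'rV[R]_n, is_convex C -> closed C -> S `<=` C -> C x].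

Definition sqdist (n : nat) (u v : 'rV[R]_n) : R := \sum_(i < n) (u 0 i - v 0 i) ^+ 2.

Definition nearest (n : nat) (C : set 'rV[R]_n) (u w : 'rV[R]_n) :=
  C w /\ forall c, C c -> sqdist u w <= sqdist u c.

(* Euclidean projection Pi_C(u) (well defined, i.e. the unique nearest point,
   when C is nonempty closed convex) *)
Definition eproj (n : nat) (C : set 'rV[R]_n) (u : 'rV[R]_n) : 'rV[R]_n :=
  xget 0 (nearest C u).

Definition eps_cycle (n : nat) (D1 D2 D3 : set 'rV[R]_n) (eps : R)
    (u1 u2 u3 : 'rV[R]_n) :=
  [/\ u1 = u3 + eps *: (eproj D1 u3 - u3),
      u2 = u1 + eps *: (eproj D2 u1 - u1) &
      u3 = u2 + eps *: (eproj D3 u2 - u2)].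

Definition vec3 (x y z : R) : 'rV[R]_3 := \row_(i < 3) nth 0 [:: x; y; z] i.
Definition vec2 (x y : R) : 'rV[R]_2 := \row_(i < 2) nth 0 [:: x; y] i.

Definition zc (u : 'rV[R]_3) : R := u 0 ord_max.
Definition xy (u : 'rV[R]_3) : 'rV[R]_2 := \row_(i < 2) u 0 (widen_ord (isT : (2 <= 3)%N) i).

End Defs.

(* Main.v *)
Require Import Defs.
From HB Require Import structures.
From mathcomp Require Import all_boot all_order all_algebra.
From mathcomp Require Import all_classical all_reals all_analysis.
From mathcomp Require Import ring lra.
Import Order.TTheory GRing.Theory Num.Theory.
Import numFieldTopology.Exports numFieldNormedType.Exports.
Local Open Scope classical_set_scope.
Local Open Scope ring_scope.
From mathcomp Require Import ring lra.
Set Implicit Arguments. Unset Strict Implicit.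

Definition o0 : 'I_3 := @Ordinal 3 0 isT.
Definition o1 : 'I_3 := @Ordinal 3 1 isT.
Definition o2 : 'I_3 := @Ordinal 3 2 isT.
Definition q0 : 'I_2 := @Ordinal 2 0 isT.
Definition q1 : 'I_2 := @Ordinal 2 1 isT.

Lemma ord3P (i : 'I_3) : i = o0 \/ i = o1 \/ i = o2.
Proof.
case: i => [[|[|[|k]]] Hk]; [left|right;left|right;right|]; try by apply/val_inj.
by [].
Qed.

Lemma ord2P (i : 'I_2) : i = q0 \/ i = q1.
Proof.
case: i => [[|[|k]] Hk]; [left|right|]; try by apply/val_inj.
by [].
Qed.

Lemma sum3 (R : realType) (F : 'I_3 -> R) : \sum_(i < 3) F i = F o0 + F o1 + F o2.
Proof.
rewrite !big_ord_recr big_ord0 /= GRing.add0r.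
by congr (F _ + F _ + F _); apply/val_inj.
Qed.

Lemma sum2 (R : realType) (F : 'I_2 -> R) : \sum_(i < 2) F i = F q0 + F q1.
Proof.
rewrite !big_ord_recr big_ord0 /= GRing.add0r.
by congr (F _ + F _); apply/val_inj.
Qed.

Lemma sqdist3 (R : realType) (u v : 'rV[R]_3) : sqdist u v =
  (u 0 o0 - v 0 o0) ^+ 2 + (u 0 o1 - v 0 o1) ^+ 2 + (u 0 o2 - v 0 o2) ^+ 2.
Proof. by rewrite /sqdist sum3. Qed.

Lemma sqdist2 (R : realType) (u v : 'rV[R]_2) : sqdist u v =
  (u 0 q0 - v 0 q0) ^+ 2 + (u 0 q1 - v 0 q1) ^+ 2.
Proof. by rewrite /sqdist sum2. Qed.

Lemma eq3 (R : realType) (u v : 'rV[R]_3) :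
  u 0 o0 = v 0 o0 -> u 0 o1 = v 0 o1 -> u 0 o2 = v 0 o2 -> u = v.
Proof. by move=> h0 h1 h2; apply/rowP => i; case: (ord3P i) => [->|[->|->]]. Qed.

Lemma eq2 (R : realType) (u v : 'rV[R]_2) :
  u 0 q0 = v 0 q0 -> u 0 q1 = v 0 q1 -> u = v.
Proof. by move=> h0 h1; apply/rowP => i; case: (ord2P i) => [->|->]. Qed.

Lemma zcE (R : realType) (u : 'rV[R]_3) : zc u = u 0 o2.
Proof. by rewrite /zc; congr (u 0 _); apply/val_inj. Qed.

Lemma xy0 (R : realType) (u : 'rV[R]_3) : xy u 0 q0 = u 0 o0.
Proof. by rewrite /xy mxE; congr (u 0 _); apply/val_inj. Qed.
Lemma xy1 (R : realType) (u : 'rV[R]_3) : xy u 0 q1 = u 0 o1.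
Proof. by rewrite /xy mxE; congr (u 0 _); apply/val_inj. Qed.

Lemma vec3E (R : realType) (x y z : R) :
  [/\ vec3 x y z 0 o0 = x, vec3 x y z 0 o1 = y & vec3 x y z 0 o2 = z].
Proof. by rewrite /vec3 !mxE. Qed.
Lemma vec2E (R : realType) (x y : R) :
  vec2 x y 0 q0 = x /\ vec2 x y 0 q1 = y.
Proof. by rewrite /vec2 !mxE. Qed.

Lemma combE (R : realType) n (x y : 'rV[R]_n) (l : R) i :
  (l *: x + (1 - l) *: y) 0 i = l * x 0 i + (1 - l) * y 0 i.
Proof. by rewrite !mxE. Qed.

Lemma stepE (R : realType) n (u w : 'rV[R]_n) (e : R) i :
  (u + e *: (w - u)) 0 i = u 0 i + e * (w 0 i - u 0 i).
Proof. by rewrite !mxE. Qed.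

Lemma coordc (R : realType) n (i : 'I_n) : continuous (fun y : 'rV[R]_n => y 0 i).
Proof. exact: coord_continuous. Qed.

Lemma sq_cont (R : realType) (c : R) : continuous (fun r : R => (c - r) ^+ 2).
Proof.
move=> r.
have h : (fun r : R => c - r) @ r --> c - r.
  apply: (@cvgB R R^o R (nbhs r)); [exact: cvg_cst | exact: cvg_id].
have := (@cvgM R R (nbhs r) _ _ _ _ _ h h).
have -> : (fun r : R => c - r) \* (fun r : R => c - r) = (fun r : R => (c - r) ^+ 2).
  by apply/funext => y /=; rewrite expr2.
by rewrite -expr2; apply.
Qed.

Lemma aff_cont (R : realType) (a b : R) : continuous (fun r : R => a * (r - b)).
Proof.
move=> r.
have h : (fun r : R => r - b) @ r --> r - b.
  apply: (@cvgB R R^o R (nbhs r)); [exact: cvg_id | exact: cvg_cst].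
exact: (@cvgMl_tmp R R (nbhs r) _ _ a _ h).
Qed.

Lemma sqc (R : realType) n (i : 'I_n) (c : R) :
  continuous (fun y : 'rV[R]_n => (c - y 0 i) ^+ 2).
Proof.
move=> x. have h1 := @coordc _ _ i x. have h2 := @sq_cont _ c (x 0 i).
have := continuous_comp h1 h2. exact.
Qed.

Lemma affc (R : realType) n (i : 'I_n) (a b : R) :
  continuous (fun y : 'rV[R]_n => a * (y 0 i - b)).
Proof.
move=> x. have h1 := @coordc _ _ i x. have h2 := @aff_cont _ a b (x 0 i).
have := continuous_comp h1 h2. exact.
Qed.

Lemma addc (R : realType) n (f g : 'rV[R]_n -> R) : continuous f -> continuous g ->
  continuous (fun y => f y + g y).
Proof. move=> hf hg x. exact: (continuousD (hf x) (hg x)). Qed.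

Lemma lin2c (R : realType) (a b c d : R) :
  continuous (fun y : 'rV[R]_2 => a * (y 0 q0 - b) + c * (y 0 q1 - d)).
Proof. by apply: addc; apply: affc. Qed.

Lemma sqdist3c (R : realType) (u : 'rV[R]_3) : continuous (sqdist u).
Proof.
have -> : sqdist u = (fun x => (u 0 o0 - x 0 o0) ^+ 2 + (u 0 o1 - x 0 o1) ^+ 2
   + (u 0 o2 - x 0 o2) ^+ 2).
  by apply/funext => x; rewrite sqdist3.
by apply: addc; [apply: addc|]; apply: sqc.
Qed.

Lemma xyc (R : realType) : continuous (@xy R).
Proof.
move=> M s /= /nbhs_ballP [e e0 es].
apply/nbhs_ballP; exists e => //= N [_ MN]; apply: es; split => // i j.
rewrite !mxE; exact: MN.
Qed.

Lemma co_sub (R : realType) n (S K : set 'rV[R]_n) :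
  is_convex K -> S `<=` K -> co S `<=` K.
Proof. by move=> cK SK x /(_ K cK SK). Qed.

Lemma cco_sub (R : realType) n (S K : set 'rV[R]_n) :
  is_convex K -> closed K -> S `<=` K -> cco S `<=` K.
Proof. by move=> cK clK SK x /(_ K cK clK SK). Qed.

Lemma sub_cco (R : realType) n (S : set 'rV[R]_n) : S `<=` cco S.
Proof. by move=> x Sx K _ _ /(_ x Sx). Qed.

Lemma cco_conv (R : realType) n (S : set 'rV[R]_n) : is_convex (cco S).
Proof.
move=> x y l hx hy hl K cK clK SK.
exact: cK (hx K cK clK SK) (hy K cK clK SK) hl.
Qed.

Lemma cco_closed (R : realType) n (S : set 'rV[R]_n) : closed (cco S).
Proof.
have -> : cco S = \bigcap_(K in [set K : set 'rV[R]_n | is_convex K /\ closed K /\ S `<=` K]) K.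
  apply/seteqP; split => x /= H.
  - by move=> K [cK [clK SK]]; exact: H.
  - by move=> K cK clK SK; exact: H.
by apply: closed_bigI => K [_ []].
Qed.

Lemma vec3E0 (R : realType) (x y z : R) : vec3 x y z 0 o0 = x.
Proof. by rewrite /vec3 !mxE. Qed.
Lemma vec3E1 (R : realType) (x y z : R) : vec3 x y z 0 o1 = y.
Proof. by rewrite /vec3 !mxE. Qed.
Lemma vec3E2 (R : realType) (x y z : R) : vec3 x y z 0 o2 = z.
Proof. by rewrite /vec3 !mxE. Qed.
Lemma vec2E0 (R : realType) (x y : R) : vec2 x y 0 q0 = x.
Proof. by rewrite /vec2 !mxE. Qed.
Lemma vec2E1 (R : realType) (x y : R) : vec2 x y 0 q1 = y.
Proof. by rewrite /vec2 !mxE. Qed.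

Lemma seg_sub (R : realType) (x0 y0 : R) c :
  co [set vec3 x0 y0 1; vec3 x0 y0 (-1)] c ->
  [/\ c 0 o0 = x0, c 0 o1 = y0 & -1 <= c 0 o2 <= 1].
Proof.
apply: (@co_sub _ _ _ [set c : 'rV[R]_3 | [/\ c 0 o0 = x0, c 0 o1 = y0 & -1 <= c 0 o2 <= 1]]).
- move=> x y l [hx0 hx1 /andP[hx2 hx3]] [hy0 hy1 /andP[hy2 hy3]] /andP[l0 l1].
  rewrite /= !combE hx0 hx1 hy0 hy1; split; try ring.
  apply/andP; split; nra.
- move=> v [->|->]; rewrite /= vec3E0 vec3E1 vec3E2; split => //; apply/andP; split; lra.
Qed.

Lemma seg_mem (R : realType) (x0 y0 s : R) : -1 <= s <= 1 ->
  co [set vec3 x0 y0 1; vec3 x0 y0 (-1)] (vec3 x0 y0 s).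
Proof.
move=> /andP[s0 s1] K cK SK.
have hl : 0 <= (1 + s) / 2 <= 1 by apply/andP; split; lra.
have := cK _ _ _ (SK _ (or_introl erefl)) (SK _ (or_intror erefl)) hl.
congr K; apply: eq3; rewrite combE ?vec3E0 ?vec3E1 ?vec3E2; lra.
Qed.

Lemma eproj_nearest (R : realType) n (C : set 'rV[R]_n) u :
  (exists w, nearest C u w) -> nearest C u (eproj C u).
Proof. exact: xgetPex. Qed.

Lemma eproj_set1 (R : realType) n (a x : 'rV[R]_n) : eproj [set a] x = a.
Proof.
have [] : nearest [set a] x (eproj [set a] x).
  by apply: eproj_nearest; exists a; split => // c ->.
by [].
Qed.

Lemma clamp_ex (R : realType) (z : R) : exists s, [/\ -1 <= s <= 1,
  (forall s', -1 <= s' <= 1 -> (z - s) ^+ 2 <= (z - s') ^+ 2) &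
  (-1 <= z <= 1 -> s = z)].
Proof.
case: (ltrP z (-1)) => hz.
  exists (-1); split; first by apply/andP; split; lra.
  - by move=> s' /andP[h1 h2]; nra.
  - by move=> /andP[h1 h2]; lra.
case: (ltrP 1 z) => hz'.
  exists 1; split; first by apply/andP; split; lra.
  - by move=> s' /andP[h1 h2]; nra.
  - by move=> /andP[h1 h2]; lra.
exists z; split => //; first by apply/andP; split.
by move=> s' _; rewrite subrr expr2 mulr0 sqr_ge0.
Qed.

Lemma seg_proj (R : realType) (x0 y0 : R) (u : 'rV[R]_3) :
  let C := co [set vec3 x0 y0 1; vec3 x0 y0 (-1)] in
  let w := eproj C u in
  [/\ nearest C u w, w 0 o0 = x0, w 0 o1 = y0, -1 <= w 0 o2 <= 1 &
      (-1 <= u 0 o2 <= 1 -> w 0 o2 = u 0 o2)].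
Proof.
move=> C w.
have [s [hs hmin heq]] := clamp_ex (u 0 o2).
have hn : nearest C u w.
  apply: eproj_nearest; exists (vec3 x0 y0 s); split; first exact: seg_mem.
  move=> c /seg_sub [c0 c1 c2].
  rewrite !sqdist3 vec3E0 vec3E1 vec3E2 c0 c1.
  have := hmin _ c2; lra.
have [Cw hw] := hn.
have [w0 w1 w2] := seg_sub Cw.
split => // hu.
have := hw _ (@seg_mem _ x0 y0 _ hu).
rewrite !sqdist3 vec3E0 vec3E1 vec3E2 w0 w1 => h.
have h' : (u 0 o2 - w 0 o2) ^+ 2 <= 0 by nra.
have : (u 0 o2 - w 0 o2) ^+ 2 = 0 by apply/eqP; rewrite eq_le h' sqr_ge0.
move/eqP; rewrite sqrf_eq0 subr_eq0 => /eqP ->. by [].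
Qed.

Lemma var_ineq (R : realType) (C : set 'rV[R]_3) u w c :
  is_convex C -> nearest C u w -> C c ->
  (u 0 o0 - w 0 o0) * (c 0 o0 - w 0 o0) + (u 0 o1 - w 0 o1) * (c 0 o1 - w 0 o1)
  + (u 0 o2 - w 0 o2) * (c 0 o2 - w 0 o2) <= 0.
Proof.
move=> cC [Cw hw] Cc.
set d := _ + _ + _.
set N := (c 0 o0 - w 0 o0) ^+ 2 + (c 0 o1 - w 0 o1) ^+ 2 + (c 0 o2 - w 0 o2) ^+ 2.
have key : forall l, 0 < l <= 1 -> 2 * d <= l * N.
  move=> l /andP[l0 l1].
  have := hw _ (cC c w l Cc Cw _); rewrite ?l1 ?(ltW l0) //.
  rewrite !sqdist3 !combE => h.
  have h2 : 0 <= l * (l * N - 2 * d).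
    rewrite /N /d; move: h; set a0 := u 0 o0; set a1 := u 0 o1; set a2 := u 0 o2.
    set b0 := w 0 o0; set b1 := w 0 o1; set b2 := w 0 o2.
    set e0 := c 0 o0; set e1 := c 0 o1; set e2 := c 0 o2. nra.
  have : 0 <= l * N - 2 * d.
    by rewrite -(pmulr_rge0 _ l0).
  lra.
rewrite leNgt; apply/negP => d0.
have N0 : 0 <= N by rewrite /N; apply: addr_ge0; [apply: addr_ge0|]; exact: sqr_ge0.
have Nd : 0 < N + d by lra.
set l := d / (N + d).
have l0 : 0 < l by rewrite /l divr_gt0.
have hl : l * (N + d) = d by rewrite /l divfK // gt_eqF.
have l1 : l <= 1 by rewrite /l ler_pdivrMr // mul1r; lra.
have := key l; rewrite l0 l1 => /(_ isT) h.
have ld : 0 < l * d by rewrite mulr_gt0.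
have : l * N = d - l * d by rewrite -{1}hl; ring.
lra.
Qed.

Lemma uniq2 (R : realType) (C : set 'rV[R]_2) x n m :
  is_convex C -> nearest C x n -> nearest C x m -> n = m.
Proof.
move=> cC [Cn hn] [Cm hm].
have hh : 0 <= (1 / 2 : R) <= 1 by apply/andP; split; lra.
have hmid := hn _ (cC n m (1/2) Cn Cm hh).
have h1 := hn _ Cm. have h2 := hm _ Cn.
move: hmid h1 h2; rewrite !sqdist2 !combE.
set a0 := x 0 q0; set a1 := x 0 q1; set b0 := n 0 q0; set b1 := n 0 q1.
set c0 := m 0 q0; set c1 := m 0 q1 => hmid h1 h2.
have : (b0 - c0) ^+ 2 + (b1 - c1) ^+ 2 <= 0 by nra.
move=> h.
have e0 : (b0 - c0) ^+ 2 = 0.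
  apply/eqP; rewrite eq_le sqr_ge0 andbT; have := sqr_ge0 (b1 - c1); lra.
have e1 : (b1 - c1) ^+ 2 = 0.
  apply/eqP; rewrite eq_le sqr_ge0 andbT; have := sqr_ge0 (b0 - c0); lra.
move/eqP: e0; rewrite sqrf_eq0 subr_eq0 => /eqP e0.
move/eqP: e1; rewrite sqrf_eq0 subr_eq0 => /eqP e1.
exact: eq2.
Qed.

Lemma cco_cube (R : realType) (S : set 'rV[R]_3) :
  (forall v, S v -> forall i, -1 <= v 0 i <= 1) ->
  [/\ compact (cco S) & forall w, cco S w -> forall i, -1 <= w 0 i <= 1].
Proof.
move=> hS.
pose cube := [set v : 'rV[R]_3 | forall i, `[(-1 : R), 1]%classic (v ord0 i)].
have ccube : compact cube.
  exact: (@rV_compact _ 3 (fun _ => `[(-1 : R), 1]%classic) (fun _ => @segment_compact _ _ _)).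
have clcube : closed cube by apply: compact_closed.
have cvcube : is_convex cube.
  move=> x y l hx hy /andP[l0 l1] i; have := hx i; have := hy i.
  rewrite /= !in_itv /= !mxE => /andP[a1 a2] /andP[b1 b2].
  apply/andP; split; nra.
have sub : cco S `<=` cube.
  apply: cco_sub => // v Sv i; rewrite /= in_itv /=; exact: hS.
split.
  have h1 := subclosed_compact (@cco_closed _ _ S).
  have h2 := h1 _ ccube.
  exact: h2 sub.
by move=> w /sub hw i; have := hw i; rewrite /= in_itv.
Qed.

Lemma cco_nearest (R : realType) (S : set 'rV[R]_3) u :
  S !=set0 -> (forall v, S v -> forall i, -1 <= v 0 i <= 1) ->
  exists w, nearest (cco S) u w.
Proof.
move=> [v0 Sv0] hS.
have [ccS _] := cco_cube hS.
have [w Sw wmin] := @EVT_min_rV R 3 (sqdist u) (cco S) (ex_intro _ v0 (sub_cco Sv0)) ccS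
   (continuous_subspaceT (@sqdist3c R u)).
exists w; split; first exact: set_mem.
by move=> c Sc; apply: wmin; exact: mem_set.
Qed.

Lemma stepP (R : realType) n (u v w : 'rV[R]_n) e :
  v = u + e *: (w - u) -> forall i, v 0 i = u 0 i + e * (w 0 i - u 0 i).
Proof. by move=> -> i; rewrite stepE. Qed.

Lemma proj_xy (R : realType) (S : set 'rV[R]_3) (S' : set 'rV[R]_2) u w :
  (forall v, S v -> S' (xy v)) -> (forall v', S' v' -> exists2 v, S v & xy v = v') ->
  nearest (cco S) u w -> w 0 o2 = u 0 o2 -> eproj (cco S') (xy u) = xy w.
Proof.
move=> hSS' hlift hw wz.
have [Cw _] := hw.
have memw : cco S' (xy w).
  move=> K cK clK S'K.
  have : cco S `<=` (@xy R @^-1` K).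
    apply: cco_sub.
    - move=> x y l hx hy hl; rewrite /preimage /=.
      have -> : xy (l *: x + (1 - l) *: y) = l *: xy x + (1 - l) *: xy y.
        by apply: eq2; rewrite ?xy0 ?xy1 !combE ?xy0 ?xy1.
      exact: cK.
    - by apply: preimage_closed => // x _; exact: xyc.
    - move=> v Sv; exact: S'K (hSS' v Sv).
  by move/(_ w Cw).
have nw : nearest (cco S') (xy u) (xy w).
  split => // c' Cc'.
  pose H := [set y : 'rV[R]_2 | (u 0 o0 - w 0 o0) * (y 0 q0 - w 0 o0)
      + (u 0 o1 - w 0 o1) * (y 0 q1 - w 0 o1) <= 0].
  have : cco S' `<=` H.
    apply: cco_sub.
    - move=> x y l hx hy /andP[l0 l1]; rewrite /H /= !combE; move: hx hy; rewrite /H /=.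
      move=> hx hy; nra.
    - have -> : H = (fun y : 'rV[R]_2 => (u 0 o0 - w 0 o0) * (y 0 q0 - w 0 o0)
          + (u 0 o1 - w 0 o1) * (y 0 q1 - w 0 o1)) @^-1` [set r | r <= 0] by [].
      by apply: preimage_closed; [move=> y _; exact: lin2c | exact: closed_le].
    - move=> v' /hlift [v Sv <-]; rewrite /H /= xy0 xy1.
      have := var_ineq (@cco_conv _ _ S) hw (sub_cco Sv).
      by rewrite wz subrr mul0r addr0.
  move/(_ c' Cc'); rewrite /H /= => hc.
  rewrite !sqdist2 !xy0 !xy1.
  have := sqr_ge0 (c' 0 q0 - w 0 o0); have := sqr_ge0 (c' 0 q1 - w 0 o1).
  nra.
have hn := eproj_nearest (ex_intro _ _ nw).
exact: uniq2 (@cco_conv _ _ S') hn nw.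
Qed.

Lemma zarg (R : realType) (e z1 z2 z3 a1 a2 a3 : R) : 0 < e <= 1 ->
  z1 = z3 + e * (a1 - z3) -> z2 = z1 + e * (a2 - z1) -> z3 = z2 + e * (a3 - z2) ->
  -1 <= a1 <= 1 -> -1 <= a2 <= 1 -> -1 <= a3 <= 1 ->
  (-1 <= z3 <= 1 -> a1 = z3) -> (-1 <= z1 <= 1 -> a2 = z1) ->
  [/\ z1 = z3, z2 = z3, a1 = z3, a2 = z3 & a3 = z3].
Proof.
move=> /andP[e0 e1] h1 h2 h3 /andP[a1l a1u] /andP[a2l a2u] /andP[a3l a3u] H1 H2.
have hz3 : -1 <= z3 <= 1.
  apply/andP; split; rewrite leNgt; apply/negP => hz.
  - have hz1 : z3 <= z1 by nra.
    have hz2 : z3 <= z2 by nra.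
    nra.
  - have hz1 : z1 <= z3 by nra.
    have hz2 : z2 <= z3 by nra.
    nra.
have ea1 := H1 hz3.
have ez1 : z1 = z3 by rewrite h1 ea1 subrr mulr0 addr0.
have ea2 : a2 = z1 by apply: H2; rewrite ez1.
have ez2 : z2 = z3 by rewrite h2 ea2 subrr mulr0 addr0.
have : e * (a3 - z3) = 0 by move: h3; rewrite ez2; lra.
move/eqP; rewrite mulf_eq0 (gt_eqF e0) /= subr_eq0 => /eqP ea3.
by split => //; rewrite ea2.
Qed.
Unset Implicit Arguments. Set Strict Implicit.

Theorem proposition1 (R : realType) (t : nat -> R) (eps : R) :
  (forall k : nat, (1 <= k)%N -> t k < t k.+1) ->
  t 1%N = pi / 4 ->
  t @ \oo --> pi / 2 ->
  0 < eps <= 1 ->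
  let C1 := co [set vec3 (-2) 2 1; vec3 (-2) 2 (-1)] in
  let C2 := co [set vec3 2 2 1; vec3 2 2 (-1)] in
  let C3 := cco [set vec3 (cos (t k)) (sin (t k)) ((-1) ^+ k) | k in [set k : nat | (1 <= k)%N]] in
  let C1' := [set vec2 (-2) 2] in
  let C2' := [set vec2 2 2] in
  let C3' := cco [set vec2 (cos (t k)) (sin (t k)) | k in [set k : nat | (1 <= k)%N]] in
  forall u1 u2 u3 : 'rV[R]_3,
  let w1 := eproj C1 u3 in
  let w2 := eproj C2 u1 in
  let w3 := eproj C3 u2 in
  eps_cycle C1 C2 C3 eps u1 u2 u3 <->
  ((exists c : R, [/\ zc u1 = c, zc u2 = c, zc u3 = c &
                      [/\ zc w1 = c, zc w2 = c & zc w3 = c]]) /\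
   (eps_cycle C1' C2' C3' eps (xy u1) (xy u2) (xy u3) /\
    [/\ eproj C1' (xy u3) = xy w1, eproj C2' (xy u1) = xy w2 &
        eproj C3' (xy u2) = xy w3])).
Proof.
move=> _ _ _ heps C1 C2 C3 C1' C2' C3' u1 u2 u3 w1 w2 w3.
rewrite /w1 /w2 /w3 /C1 /C2 /C3 /C1' /C2' /C3' {w1 w2 w3 C1 C2 C3 C1' C2' C3'}.
set S3 := [set vec3 (cos (t k)) (sin (t k)) ((-1) ^+ k) | k in [set k : nat | (1 <= k)%N]].
set S3' := [set vec2 (cos (t k)) (sin (t k)) | k in [set k : nat | (1 <= k)%N]].
have hS3 : forall v, S3 v -> forall i, -1 <= v 0 i <= 1.
  move=> v [k _ <-] i; case: (ord3P i) => [->|[->|->]];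
    rewrite ?vec3E0 ?vec3E1 ?vec3E2; apply/andP; split;
    rewrite ?cos_geN1 ?cos_le1 ?sin_geN1 ?sin_le1 //.
  - by rewrite -signr_odd; case: (odd k); rewrite /= ?expr1 ?expr0 //; lra.
  - by rewrite -signr_odd; case: (odd k); rewrite /= ?expr1 ?expr0 //; lra.
have ne3 : S3 !=set0.
  by exists (vec3 (cos (t 1%N)) (sin (t 1%N)) ((-1) ^+ 1%N)); exists 1%N.
have nw3 : nearest (cco S3) u2 (eproj (cco S3) u2).
  exact: eproj_nearest (cco_nearest u2 ne3 hS3).
have [_ hcube] := cco_cube hS3.
have w3z : -1 <= eproj (cco S3) u2 0 o2 <= 1 by apply: hcube; case: nw3.
have [nw1 w1x w1y w1z w1eq] := seg_proj (-2) 2 u3.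
have [nw2 w2x w2y w2z w2eq] := seg_proj 2 2 u1.
have hSS' : forall v, S3 v -> S3' (xy v).
  move=> v [k hk <-]; exists k => //.
  by apply: eq2; rewrite ?xy0 ?xy1 ?vec3E0 ?vec3E1 ?vec2E0 ?vec2E1.
have hlift : forall v', S3' v' -> exists2 v, S3 v & xy v = v'.
  move=> v' [k hk <-]; exists (vec3 (cos (t k)) (sin (t k)) ((-1) ^+ k)).
    by exists k.
  by apply: eq2; rewrite ?xy0 ?xy1 ?vec3E0 ?vec3E1 ?vec2E0 ?vec2E1.
split.
- case=> h1 h2 h3.
  have [z1 z2 a1 a2 a3] := zarg heps (stepP h1 o2) (stepP h2 o2) (stepP h3 o2)
    w1z w2z w3z w1eq w2eq.
  have k3 : eproj (cco S3') (xy u2) = xy (eproj (cco S3) u2).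
    by apply: proj_xy hSS' hlift nw3 _; rewrite a3 z2.
  split.
    exists (u3 0 o2); rewrite !zcE; split => //.
  split.
    split.
    + rewrite eproj_set1; apply: eq2; rewrite stepE ?xy0 ?xy1 ?vec2E0 ?vec2E1.
        by rewrite (stepP h1 o0) w1x.
      by rewrite (stepP h1 o1) w1y.
    + rewrite eproj_set1; apply: eq2; rewrite stepE ?xy0 ?xy1 ?vec2E0 ?vec2E1.
        by rewrite (stepP h2 o0) w2x.
      by rewrite (stepP h2 o1) w2y.
    + rewrite k3; apply: eq2; rewrite stepE ?xy0 ?xy1.
        exact: (stepP h3 o0).
      exact: (stepP h3 o1).
  split.
  + rewrite eproj_set1; apply: eq2; rewrite ?xy0 ?xy1 ?vec2E0 ?vec2E1 //.
  + rewrite eproj_set1; apply: eq2; rewrite ?xy0 ?xy1 ?vec2E0 ?vec2E1 //.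
  + exact: k3.
- case=> [[c [hz1 hz2 hz3 [hw1 hw2 hw3]]] [[h1 h2 h3] [k1 k2 k3]]].
  rewrite !zcE in hz1 hz2 hz3 hw1 hw2 hw3.
  rewrite k1 in h1; rewrite k2 in h2; rewrite k3 in h3.
  split; apply: eq3; rewrite stepE.
  + by have := stepP h1 q0; rewrite !xy0.
  + by have := stepP h1 q1; rewrite !xy1.
  + by rewrite hz1 hz3 hw1; ring.
  + by have := stepP h2 q0; rewrite !xy0.
  + by have := stepP h2 q1; rewrite !xy1.
  + by rewrite hz1 hz2 hw2; ring.
  + by have := stepP h3 q0; rewrite !xy0.
  + by have := stepP h3 q1; rewrite !xy1.
  + by rewrite hz2 hz3 hw3; ring.
Qed.
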